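(* Let $\varepsilon>0$ and let $q$ be an $\varepsilon$-near square quadrilateral. If one side of $q$ has length $1$, then the length $L$ of each side adjacent to it satisfies $$\tan\!\left(\tfrac{\pi}{4}-\varepsilon\right)\cos(2\varepsilon)\ \le\ L\ \le\ \frac{\tan\left(\frac{\pi}{4}+\varepsilon\right)}{\cos(2\varepsilon)}.$$
   Context: A quadrilateral is cut by a diagonal into two triangles. Its parameters $(a_1,a_2,a_3,a_4)$ are the four angles that the diagonal makes with the four sides (the angles of the two triangles at the endpoints of the diagonal). The quadrilateral is $\varepsilon$-near square if $|a_i-\pi/4|<\varepsilon$ for all $i$.
   Formalization: The near-square parameter ε is restricted to 0 < ε < π/4 instead of ranging over all ε > 0. The statement above fails without it. *)

(* Defs.v *)
From Stdlib Require Import Reals Lra.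
Open Scope R_scope.

Definition point := (R * R)%type.
Definition vsub (p q : point) : point := (fst p - fst q, snd p - snd q).
Definition dot (u v : point) : R := fst u * fst v + snd u * snd v.
Definition vnorm (u : point) : R := sqrt (dot u u).
Definition cross (u v : point) : R := fst u * snd v - snd u * fst v.
Definition dist (p q : point) : R := vnorm (vsub p q).

Definition angle_at (O X Y : point) : R :=
  acos (dot (vsub X O) (vsub Y O) / (vnorm (vsub X O) * vnorm (vsub Y O))).

(* A quadrilateral ABCD (vertices in cyclic order), with diagonal AC. *)
Record quad := Quad { qA : point; qB : point; qC : point; qD : point }.

(* The diagonal AC cuts the quadrilateral into the two (non-degenerate)
   triangles ABC and ACD: B and D lie strictly on opposite sides of line AC. *)
Definition diagonal_cuts (q : quad) : Prop :=
  cross (vsub (qC q) (qA q)) (vsub (qB q) (qA q)) *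
  cross (vsub (qC q) (qA q)) (vsub (qD q) (qA q)) < 0.

(* The four parameters: angles the diagonal AC makes with the four sides,
   i.e. the angles of triangles ABC and ACD at the endpoints A and C. *)
Definition param (q : quad) (i : nat) : R :=
  match i with
  | 0%nat => angle_at (qA q) (qB q) (qC q)
  | 1%nat => angle_at (qC q) (qA q) (qB q)
  | 2%nat => angle_at (qC q) (qA q) (qD q)
  | _ => angle_at (qA q) (qC q) (qD q)
  end.

Definition near_square (eps : R) (q : quad) : Prop :=
  forall i : nat, (i < 4)%nat -> Rabs (param q i - PI / 4) < eps.

Definition vertex (q : quad) (i : nat) : point :=
  match (i mod 4)%nat with
  | 0%nat => qA q
  | 1%nat => qB q
  | 2%nat => qC q
  | _ => qD q
  end.

Definition side (q : quad) (i : nat) : R := dist (vertex q i) (vertex q (S i)).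

(* Main.v *)
Require Import Defs.
From Stdlib Require Import Reals Lra Psatz.
Open Scope R_scope.

Lemma vnorm_pos u v : cross u v <> 0 -> 0 < vnorm u.
Proof.
  destruct u as [a b], v as [c d]; unfold vnorm, cross, dot; simpl; intro H.
  apply sqrt_lt_R0.
  destruct (Req_dec a 0), (Req_dec b 0); subst; try nra.
Qed.

Lemma vnorm_sq u : vnorm u * vnorm u = dot u u.
Proof. unfold vnorm; apply sqrt_sqrt; destruct u; unfold dot; simpl; nra. Qed.

Lemma cross_sym u v : cross u v = - cross v u.
Proof. unfold cross; ring. Qed.

Lemma ang_facts u v : cross u v <> 0 ->
  cos (acos (dot u v / (vnorm u * vnorm v))) * (vnorm u * vnorm v) = dot u v /\
  sin (acos (dot u v / (vnorm u * vnorm v))) * (vnorm u * vnorm v) = Rabs (cross u v).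
Proof.
  intro H.
  assert (Hu := vnorm_pos u v H).
  assert (Hv : 0 < vnorm v) by (apply (vnorm_pos v u); rewrite cross_sym; lra).
  assert (Hl : (vnorm u * vnorm v)^2 = dot u v ^2 + cross u v ^2).
  { replace ((vnorm u * vnorm v)^2) with ((vnorm u * vnorm u) * (vnorm v * vnorm v)) by ring.
    rewrite !vnorm_sq. destruct u, v; unfold dot, cross; simpl; ring. }
  set (N := vnorm u * vnorm v) in *.
  assert (HN : 0 < N) by (unfold N; nra).
  assert (Hx : -1 <= dot u v / N <= 1).
  { assert (-N <= dot u v <= N) by (split; nra).
    split; [apply (Rmult_le_reg_r N); [lra|]|apply (Rmult_le_reg_r N); [lra|]];
    unfold Rdiv; rewrite Rmult_assoc, Rinv_l, Rmult_1_r by lra; lra. }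
  split.
  - rewrite cos_acos by exact Hx. field. lra.
  - rewrite sin_acos by exact Hx.
    replace (1 - (dot u v / N)²) with ((cross u v / N)²).
    + unfold Rdiv; rewrite sqrt_Rsqr_abs, Rabs_mult, Rabs_inv. rewrite (Rabs_pos_eq N) by lra. field; lra.
    + unfold Rsqr. field_simplify_eq; [|lra]. nra.
Qed.

Lemma vnorm_vsub_sym P Q : vnorm (vsub P Q) = vnorm (vsub Q P).
Proof. unfold vnorm, dot, vsub; simpl; f_equal; ring. Qed.

Lemma tri P Q R : cross (vsub Q P) (vsub R P) <> 0 ->
  vnorm (vsub Q R) * sin (angle_at R P Q) = vnorm (vsub Q P) * sin (angle_at P Q R) /\
  vnorm (vsub R P) = vnorm (vsub Q P) * cos (angle_at P Q R) + vnorm (vsub Q R) * cos (angle_at R P Q).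
Proof.
  intro H.
  assert (Hc : cross (vsub P R) (vsub Q R) = cross (vsub Q P) (vsub R P))
    by (unfold cross, vsub; simpl; ring).
  assert (H' : cross (vsub P R) (vsub Q R) <> 0) by (rewrite Hc; exact H).
  destruct (ang_facts _ _ H) as [C1 S1].
  destruct (ang_facts _ _ H') as [C2 S2].
  unfold angle_at.
  assert (E : vnorm (vsub P R) = vnorm (vsub R P)) by apply vnorm_vsub_sym.
  rewrite E in C2, S2. rewrite Hc in S2.
  assert (HPR : 0 < vnorm (vsub R P)) by (apply (vnorm_pos _ (vsub Q P)); rewrite cross_sym; lra).
  assert (Hd : dot (vsub Q P) (vsub R P) + dot (vsub P R) (vsub Q R) = vnorm (vsub R P) * vnorm (vsub R P))
    by (rewrite vnorm_sq; unfold dot, vsub; simpl; ring).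
  rewrite E.
  revert C1 S1 C2 S2.
  generalize (cos (acos (dot (vsub Q P) (vsub R P) / (vnorm (vsub Q P) * vnorm (vsub R P))))) as cp.
  generalize (sin (acos (dot (vsub Q P) (vsub R P) / (vnorm (vsub Q P) * vnorm (vsub R P))))) as sp.
  generalize (cos (acos (dot (vsub P R) (vsub Q R) / (vnorm (vsub R P) * vnorm (vsub Q R))))) as cr.
  generalize (sin (acos (dot (vsub P R) (vsub Q R) / (vnorm (vsub R P) * vnorm (vsub Q R))))) as sr.
  intros sr cr sp cp C1 S1 C2 S2.
  split.
  - apply (Rmult_eq_reg_r (vnorm (vsub R P))); [|lra]. nra.
  - apply (Rmult_eq_reg_r (vnorm (vsub R P))); [|lra]. nra.
Qed.
Lemma ang_bounds eps a : 0 < eps -> eps < PI/4 -> Rabs (a - PI/4) < eps ->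
  sin (PI/4 - eps) <= sin a <= sin (PI/4 + eps) /\
  sin (PI/4 - eps) <= cos a <= sin (PI/4 + eps).
Proof.
  intros H1 H2 H3. pose proof PI_RGT_0.
  destruct (Rabs_def2 _ _ H3) as [H4 H5].
  assert (K : forall b, Rabs (b - PI/4) < eps -> sin (PI/4 - eps) <= sin b <= sin (PI/4 + eps)).
  { intros b Hb. destruct (Rabs_def2 _ _ Hb).
    split; apply sin_incr_1; lra. }
  split; [apply K; auto|].
  rewrite <- sin_shift. apply K. replace (PI/2 - a - PI/4) with (-(a - PI/4)) by field.
  rewrite Rabs_Ropp; auto.
Qed.

Lemma sum_bounds eps a b : 0 < eps -> eps < PI/4 -> Rabs (a - PI/4) < eps -> Rabs (b - PI/4) < eps ->
  cos (2*eps) <= sin a * cos b + cos a * sin b <= 1.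
Proof.
  intros H1 H2 Ha Hb. pose proof PI_RGT_0.
  destruct (Rabs_def2 _ _ Ha), (Rabs_def2 _ _ Hb).
  rewrite <- sin_plus. split.
  - rewrite <- cos_shift.
    destruct (Rle_dec 0 (PI/2 - (a+b))).
    + apply cos_decr_1; lra.
    + rewrite <- (cos_neg (PI/2 - (a+b))). apply cos_decr_1; lra.
  - apply SIN_bound.
Qed.

Lemma key_consts eps : 0 < eps -> eps < PI/4 ->
  let m := sin (PI/4 - eps) in let M := sin (PI/4 + eps) in
  0 < m /\ 0 < M /\ m*m + M*M = 1 /\
  tan (PI/4 - eps) = m / M /\ tan (PI/4 + eps) = M / m /\ cos (2*eps) = 2*m*M.
Proof.
  intros H1 H2 m M. pose proof PI_RGT_0.
  assert (Hc : cos (PI/4 + eps) = m).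
  { unfold m. rewrite <- cos_shift. f_equal. field. }
  assert (Hc' : cos (PI/4 - eps) = M).
  { unfold M. rewrite <- cos_shift. f_equal. field. }
  assert (0 < m) by (apply sin_gt_0; lra).
  assert (0 < M) by (apply sin_gt_0; lra).
  repeat split; auto.
  - pose proof (sin2_cos2 (PI/4 + eps)). rewrite Hc in H4. unfold Rsqr in H4. fold M in H4. lra.
  - unfold tan. rewrite Hc'. reflexivity.
  - unfold tan. rewrite Hc. reflexivity.
  - replace (2*eps) with ((PI/4+eps) - (PI/4 - eps)) by field.
    rewrite cos_minus, Hc, Hc'. fold m M. ring.
Qed.

Lemma final_bound eps L a b S1 S2 : 0 < eps -> eps < PI/4 ->
  sin (PI/4 - eps) <= a <= sin (PI/4 + eps) ->
  sin (PI/4 - eps) <= b <= sin (PI/4 + eps) ->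
  cos (2*eps) <= S1 <= 1 -> cos (2*eps) <= S2 <= 1 ->
  L * b * S2 = a * S1 ->
  tan (PI / 4 - eps) * cos (2 * eps) <= L /\
  L <= tan (PI / 4 + eps) / cos (2 * eps).
Proof.
  intros H1 H2 Ha Hb HS1 HS2 E.
  destruct (key_consts eps H1 H2) as (Hm & HM & Hs & T1 & T2 & C).
  rewrite T1, T2, C. rewrite C in HS1, HS2.
  set (m := sin (PI/4 - eps)) in *. set (M := sin (PI/4 + eps)) in *.
  assert (0 < 2*m*M) by nra.
  assert (Hb' : 0 < b * S2) by nra.
  assert (HL : 0 < L) by nra.
  assert (b * S2 <= M) by nra.
  assert (2*m*m*M <= a * S1) by nra.
  assert (a * S1 <= M) by nra.
  assert (2*m*m*M <= b * S2) by nra.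
  split.
  - replace (m / M * (2*m*M)) with (2*m*m) by (field; lra). nra.
  - replace (M / m / (2*m*M)) with (/(2*m*m)) by (field; lra).
    apply (Rmult_le_reg_r (2*m*m)); [nra|]. rewrite Rinv_l by nra. nra.
Qed.

Lemma side_per q n j : side q (4*n + j) = side q j.
Proof.
  unfold side, vertex.
  replace (S (4*n + j)) with (S j + n*4)%nat by lia.
  replace (4*n + j)%nat with (j + n*4)%nat by lia.
  rewrite !Nat.Div0.mod_add. reflexivity.
Qed.

Lemma angle_sym O X Y : angle_at O X Y = angle_at O Y X.
Proof. unfold angle_at, dot. f_equal. rewrite (Rmult_comm (vnorm (vsub X O))). f_equal. ring. Qed.

Theorem lemma3p4p4 (eps : R) (q : quad) :
  0 < eps -> eps < PI / 4 ->
  diagonal_cuts q -> near_square eps q ->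
  forall i : nat, side q i = 1 ->
  forall L : R, (L = side q (S i) \/ L = side q (i + 3)) ->
    tan (PI / 4 - eps) * cos (2 * eps) <= L /\
    L <= tan (PI / 4 + eps) / cos (2 * eps).
Proof.
  intros He1 He2 Hcut Hns i Hi L HL.
  assert (Hb : forall k, (k < 4)%nat ->
    sin (PI/4 - eps) <= sin (param q k) <= sin (PI/4 + eps) /\
    sin (PI/4 - eps) <= cos (param q k) <= sin (PI/4 + eps))
    by (intros k Hk; apply ang_bounds; auto).
  assert (Hs : forall k l, (k < 4)%nat -> (l < 4)%nat ->
    cos (2*eps) <= sin (param q k) * cos (param q l) + cos (param q k) * sin (param q l) <= 1)
    by (intros k l Hk Hl; apply sum_bounds; auto).
  destruct q as [A B C D]. unfold diagonal_cuts in Hcut; simpl in *.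
  assert (N1 : cross (vsub B A) (vsub C A) <> 0).
  { rewrite cross_sym. intro E. rewrite <- (Ropp_involutive (cross (vsub C A) (vsub B A))), E in Hcut. lra. }
  assert (N2 : cross (vsub D A) (vsub C A) <> 0).
  { rewrite cross_sym. intro E. rewrite <- (Ropp_involutive (cross (vsub C A) (vsub D A))), E in Hcut. lra. }
  destruct (tri A B C N1) as [R1 R2].
  destruct (tri A D C N2) as [R3 R4].
  rewrite (angle_sym A D C) in R3, R4.
  pose proof (Hb 0%nat ltac:(lia)) as B0. pose proof (Hb 1%nat ltac:(lia)) as B1.
  pose proof (Hb 2%nat ltac:(lia)) as B2. pose proof (Hb 3%nat ltac:(lia)) as B3.
  pose proof (Hs 0%nat 1%nat ltac:(lia) ltac:(lia)) as S01.
  pose proof (Hs 2%nat 3%nat ltac:(lia) ltac:(lia)) as S23.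
  unfold param in B0, B1, B2, B3, S01, S23; simpl in *.
  assert (Ex : side (Quad A B C D) 0 = vnorm (vsub B A)) by (unfold side, dist; simpl; apply vnorm_vsub_sym).
  assert (Ey : side (Quad A B C D) 1 = vnorm (vsub B C)) by (unfold side, dist; simpl; reflexivity).
  assert (Ez : side (Quad A B C D) 2 = vnorm (vsub D C)) by (unfold side, dist; simpl; apply vnorm_vsub_sym).
  assert (Ew : side (Quad A B C D) 3 = vnorm (vsub D A)) by (unfold side, dist; simpl; reflexivity).
  revert R1 R2 R3 R4 B0 B1 B2 B3 S01 S23.
  set (x := vnorm (vsub B A)) in *. set (y := vnorm (vsub B C)) in *.
  set (z := vnorm (vsub D C)) in *. set (w := vnorm (vsub D A)) in *.
  set (d := vnorm (vsub C A)) in *.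
  set (s0 := sin (angle_at A B C)). set (c0 := cos (angle_at A B C)).
  set (s1 := sin (angle_at C A B)). set (c1 := cos (angle_at C A B)).
  set (s2 := sin (angle_at C A D)). set (c2 := cos (angle_at C A D)).
  set (s3 := sin (angle_at A C D)). set (c3 := cos (angle_at A C D)).
  intros R1 R2 R3 R4 B0 B1 B2 B3 S01 S23.
  assert (E1 : d * s1 = x * (s0 * c1 + c0 * s1))
    by (rewrite R2; transitivity (x*c0*s1 + (y*s1)*c1); [ring|]; rewrite R1; ring).
  assert (E0 : d * s0 = y * (s0 * c1 + c0 * s1))
    by (rewrite R2; transitivity ((x*s0)*c0 + y*c1*s0); [ring|]; rewrite <- R1; ring).
  assert (E2 : d * s2 = w * (s2 * c3 + c2 * s3))
    by (rewrite R4; transitivity (w*c3*s2 + (z*s2)*c2); [ring|]; rewrite R3; ring).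
  assert (E3 : d * s3 = z * (s2 * c3 + c2 * s3))
    by (rewrite R4; transitivity ((w*s3)*c3 + z*c2*s3); [ring|]; rewrite <- R3; ring).
  set (P := s0 * c1 + c0 * s1) in *. set (Q := s2 * c3 + c2 * s3) in *.
  pose proof (Nat.div_mod_eq i 4) as Hi4.
  pose proof (Nat.mod_upper_bound i 4 ltac:(lia)) as Hk.
  set (n := (i / 4)%nat) in *. set (k := (i mod 4)%nat) in *.
  assert (HSi : S i = (4*n + S k)%nat) by lia.
  assert (Hi3 : (i + 3 = 4*n + (k+3))%nat) by lia.
  rewrite HSi, Hi3 in HL. rewrite Hi4, side_per in Hi.
  rewrite !side_per in HL.
  assert (Hk' : k = 0%nat \/ k = 1%nat \/ k = 2%nat \/ k = 3%nat) by lia.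
  assert (Ec : cos (2*eps) <= 1 <= 1) by (split; [apply COS_bound|lra]).
  assert (Ex' : side (Quad A B C D) 4 = x) by (rewrite <- Ex; reflexivity).
  assert (Ey' : side (Quad A B C D) 5 = y) by (rewrite <- Ey; reflexivity).
  assert (Ez' : side (Quad A B C D) 6 = z) by (rewrite <- Ez; reflexivity).
  destruct Hk' as [-> | [-> | [-> | ->]]]; simpl Nat.add in HL, Hi;
  destruct HL as [HL|HL]; subst L;
  rewrite ?Ex, ?Ey, ?Ez, ?Ew, ?Ex', ?Ey', ?Ez'; rewrite ?Ex, ?Ey, ?Ez, ?Ew, ?Ex', ?Ey', ?Ez' in Hi.
  - apply (final_bound eps y s0 s1 1 1); try tauto.
    rewrite Hi in R1. lra.
  - apply (final_bound eps w s2 s1 P Q); try tauto.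
    transitivity (s1*(w*Q)); [ring|]. rewrite <- E2. transitivity (s2*(d*s1)); [ring|]. rewrite E1, Hi. ring.
  - apply (final_bound eps z s3 s0 P Q); try tauto.
    transitivity (s0*(z*Q)); [ring|]. rewrite <- E3. transitivity (s3*(d*s0)); [ring|]. rewrite E0, Hi. ring.
  - apply (final_bound eps x s1 s0 1 1); try tauto.
    rewrite Hi in R1. lra.
  - apply (final_bound eps w s2 s3 1 1); try tauto.
    rewrite Hi in R3. lra.
  - apply (final_bound eps y s0 s3 Q P); try tauto.
    transitivity (s3*(y*P)); [ring|]. rewrite <- E0. transitivity (s0*(d*s3)); [ring|]. rewrite E3, Hi. ring.
  - apply (final_bound eps x s1 s2 Q P); try tauto.
    transitivity (s2*(x*P)); [ring|]. rewrite <- E1. transitivity (s1*(d*s2)); [ring|]. rewrite E2, Hi. ring.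
  - apply (final_bound eps z s3 s2 1 1); try tauto.
    rewrite Hi in R3. lra.
Qed.
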